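(* If $k=2^i-1$ is a prime (with $i\ge2$), then $k\in\mathcal C_i\setminus\mathcal C_{i-1}$.
   Context: For a positive integer $m$, $\mathcal C_m$ is the set of odd positive integers $k$ for which there exist integers $0\le j_1<j_2<\cdots<j_m\le m+k-2$ with $2^{k+m}-1\equiv \sum_{i=1}^m 2^{j_i}\pmod k$. For $i=2$, $\mathcal C_{1}$ is as defined with $m=1$. *)

(* Defs.v *)
From mathcomp Require Import all_boot.
Set Implicit Arguments. Unset Strict Implicit. Unset Printing Implicit Defensive.

Definition in_C (m k : nat) : Prop :=
  [/\ odd k, 0 < k &
   exists js : seq nat,
     [/\ sorted ltn js, size js = m, all (fun j => j <= m + k - 2) js &
         2 ^ (k + m) - 1 = \sum_(j <- js) 2 ^ j %[mod k]]].

(* Main.v *)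
Require Import Defs.
From mathcomp Require Import all_boot.
From Stdlib Require Import Lia.
Set Implicit Arguments. Unset Strict Implicit. Unset Printing Implicit Defensive.

Lemma geom_sum i : \sum_(r <- iota 0 i) 2 ^ r = (2 ^ i).-1.
Proof.
elim: i => [|i IH]; first by rewrite big_nil.
rewrite -addn1 iotaD big_cat /= IH big_seq1 add0n.
rewrite expnD expn1 muln2 -addnn.
have : 0 < 2 ^ i by rewrite expn_gt0.
by case: (2 ^ i) => // m _ /=.
Qed.

Lemma pow_mod i j : 2 ^ j = 2 ^ (j %% i) %[mod (2 ^ i).-1].
Proof.
have p0 : 0 < 2 ^ i by rewrite expn_gt0.
have h : 2 ^ i %% (2 ^ i).-1 = 1 %% (2 ^ i).-1.
  by rewrite -{1}(prednK p0) -addn1 modnDl.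
rewrite {1}(divn_eq j i) expnD (mulnC (j %/ i)) expnM.
by rewrite -modnMml -modnXm h modnXm exp1n modnMml mul1n.
Qed.

Lemma sum_mod i s : \sum_(j <- s) 2 ^ j = \sum_(j <- map (modn^~ i) s) 2 ^ j %[mod (2 ^ i).-1].
Proof.
elim: s => [|x s IH] //=. by rewrite !big_cons -modnDm (pow_mod i x) IH modnDm.
Qed.

Lemma not_uniq_dup (s : seq nat) : ~~ uniq s -> exists x, (x \in s) && (x \in rem x s).
Proof.
elim: s => [|y s IH] //=. rewrite negb_and negbK. case: (boolP (y \in s)) => ys /=.
  by exists y; rewrite inE eqxx /= ?eqxx.
move=> /IH [x /andP[xs xr]]. exists x.
have xy : y != x by apply: contraNneq ys => ->.
by rewrite inE xs orbT /= (negbTE xy) inE xr orbT.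
Qed.

Lemma sum_pos (s : seq nat) : s != [::] -> 0 < \sum_(x <- s) 2^x.
Proof. case: s => // x s _; by rewrite big_cons addn_gt0 expn_gt0. Qed.

Lemma uniq_case i s : all (fun x => x < i) s -> uniq s -> s != [::] ->
  (2^i).-1 %| \sum_(x <- s) 2^x -> i <= size s.
Proof.
move=> alls us sn dv. rewrite leqNgt; apply/negP => lt.
set c := [seq r <- iota 0 i | r \notin s].
have pe : perm_eq (s ++ c) (iota 0 i).
  apply: uniq_perm.
  - rewrite cat_uniq us filter_uniq ?iota_uniq // andbT.
    apply/hasPn => r. by rewrite mem_filter => /andP[].
  - exact: iota_uniq.
  - move=> r. rewrite mem_cat mem_filter mem_iota add0n /=.
    case rs: (r \in s) => //=. by have := allP alls r rs => ->.
have sz : size c = i - size s.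
  by have := perm_size pe; rewrite size_cat size_iota => <-; rewrite addKn.
have E : \sum_(x <- s ++ c) 2^x = \sum_(x <- iota 0 i) 2^x by apply: perm_big.
rewrite big_cat geom_sum /= in E.
have cn : c != [::] by rewrite -size_eq0 sz subn_eq0 -ltnNge.
have := sum_pos cn; have := sum_pos sn; have := dvdn_leq (sum_pos sn) dv.
rewrite -E. move: (\sum_(x <- s) 2^x) (\sum_(x <- c) 2^x) => a b.
move=> h1 h2 h3.
by move: h1; rewrite -{2}(addn0 a) leq_add2l leqNgt h3.
Qed.

Lemma weight i s : 0 < i -> all (fun x => x < i) s -> s != [::] ->
  (2^i).-1 %| \sum_(x <- s) 2 ^ x -> i <= size s.
Proof.
move=> i0; move: {2}(size s) (leqnn (size s)) => n.
elim: n s => [|n IH] s.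
  by rewrite leqn0 size_eq0 => /eqP -> _ /eqP.
move=> szn alls sn dv.
case: (boolP (uniq s)) => us; first exact: uniq_case.
have [x /andP[xs xr]] := not_uniq_dup us.
have xi : x < i := allP alls x xs.
set t := rem x (rem x s).
have pe : perm_eq s (x :: x :: t).
  apply: perm_trans (perm_to_rem xs) _. rewrite perm_cons. exact: perm_to_rem xr.
set s' := (x.+1 %% i) :: t.
have szs : size s = (size s').+1 by rewrite (perm_size pe).
have Hs : \sum_(y <- s) 2 ^ y = 2 ^ x.+1 + \sum_(y <- t) 2 ^ y.
  by rewrite (perm_big _ pe) /= !big_cons addnA addnn -mul2n expnS.
have ls' : i <= size s'.
  apply: IH => //.
  - by rewrite -ltnS -szs.
  - apply/allP => y; rewrite inE => /orP[/eqP->|/mem_rem/mem_rem/(allP alls)] //.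
    exact: ltn_pmod.
  - move: dv; rewrite /dvdn Hs big_cons.
    by move=> h; rewrite -modnDml -(pow_mod i x.+1) modnDml.
by rewrite szs ltnW.
Qed.

Theorem mainTheorem8 (i : nat) (hi : 2 <= i) (hp : prime (2 ^ i - 1)) :
  in_C i (2 ^ i - 1) /\ ~ in_C (i - 1) (2 ^ i - 1).
Proof.
have p0 : 0 < 2 ^ i by rewrite expn_gt0.
have i0 : 0 < i by apply: leq_trans hi.
rewrite subn1 in hp *.
set k := (2 ^ i).-1 in hp *.
have hk : 2 ^ i = k.+1 by rewrite prednK.
have k3 : 3 <= k.
  rewrite -ltnS -hk. have := leq_pexp2l (isT : 0 < 2) hi. by apply: leq_trans.
have oddk : odd k.
  by rewrite /k -subn1 oddB ?oddX // (negbTE (lt0n_neq0 i0)).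
have ferm : 2 ^ k = 2 %[mod k] := fermat_little 2 hp.
have Hm : forall m, 2 ^ (k + m) = 2 ^ m.+1 %[mod k].
  by move=> m; rewrite expnD -modnMml ferm modnMml -expnS.
have k0 : 0 < k by apply: leq_trans k3.
have hb : i.+1 <= i + k - 2.
  apply/leP; move/leP: k3; rewrite -?plusE -?minusE; lia.
have G : \sum_(j <- iota 1 i.-1) 2^j + 1 = k.
  by rewrite /k -geom_sum -{2}(prednK i0) /= big_cons addnC.
split.
  split => //.
  exists (iota 1 i.-1 ++ [:: i.+1]); split.
  - rewrite sorted_pairwise; last exact: ltn_trans.
    rewrite pairwise_cat -sorted_pairwise ?iota_ltn_sorted; last exact: ltn_trans.
    rewrite /= andbT; apply/allrelP => a b; rewrite mem_iota inE => /andP[_ ha] /eqP ->.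
    by rewrite add1n prednK // in ha; apply: ltn_trans ha _.
  - by rewrite size_cat size_iota /= addn1 prednK.
  - rewrite all_cat /= andbT; apply/andP; split => //.
    apply/allP => a; rewrite mem_iota => /andP[_ ha].
    rewrite add1n prednK // in ha. apply: leq_trans _ hb. exact: leq_trans (ltnW ha) (leqnSn i).
  - have L : 2^(k+i) %% k = 2.
      by rewrite Hm expnS hk mulnSr modnMDl modn_small.
    rewrite big_cat big_seq1 /= {1}(divn_eq (2^(k+i)) k) L.
    have -> : 2 ^ (k+i) %/ k * k + 2 - 1 = 2 ^ (k+i) %/ k * k + 1.
      by rewrite -addnBA.
    have -> : \sum_(j <- iota 1 i.-1) 2 ^ j + 2 ^ i.+1 = 3 * k + 1.
      move: G; rewrite expnS hk.
      move: (\sum_(j <- iota 1 i.-1) 2 ^ j) => S.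
      rewrite -?plusE -?multE; lia.
    by rewrite !modnMDl.
case=> _ _ [js [_ sz alj hm]].
have L : 2^(k+(i-1)) %% k = 1 %% k.
  by rewrite Hm subn1 prednK // hk -addn1 modnDl.
have dv : k %| \sum_(j <- js) 2 ^ j.
  rewrite /dvdn -hm {1}(divn_eq (2^(k+(i-1))) k) L (@modn_small 1 k) ?(leq_trans _ k3) //.
  by rewrite addnK modnMl.
have dv' : k %| \sum_(j <- map (modn^~ i) js) 2 ^ j.
  by move: dv; rewrite /dvdn (sum_mod i js).
have := weight i0 _ _ dv'.
rewrite size_map sz => h.
have : i <= i - 1.
  apply: h.
  - by apply/allP => y /mapP [x _ ->]; exact: ltn_pmod.
  - by rewrite -size_eq0 size_map sz subn_eq0 -ltnNge.
by rewrite leqNgt subn1 ltn_predL i0.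
Qed.
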